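(* Let $r_1,r_2,\mu,a_{12},a_{13},a_{21},a_{31},d$ be positive with $r_1>a_{12}$ and $a_{31}>\mu$, let $c>c_*:=2\sqrt{d(a_{31}-\mu)}$ and $\rho=c^2/d$. Consider the vector field on $\mathbb{R}^4$ \[ \dot X_1=X_1\big(r_1(1-X_1)-a_{12}X_2-a_{13}Y\big),\quad \dot X_2=X_2\big(r_2(1-X_2)+a_{21}X_1\big),\quad \dot Y=\rho(Y-Z),\quad \dot Z=Y(-\mu+a_{31}X_1). \] Let $\sigma_1=\frac{\rho+\sqrt{\rho^2-4\rho(a_{31}-\mu)}}{2\rho}$, $\sigma_2=\frac{\rho+\sqrt{\rho^2+4\rho\mu}}{2\rho}$, \[ \Sigma=\Big\{0\le X_1\le1,\ 0\le X_2\le 1+\tfrac{a_{21}}{r_2},\ Y\ge0,\ \sigma_1Y\le Z\le\sigma_2Y\Big\}, \] and \[ P_i=\Big\{0<X_1<1,\ 0<X_2<1+\tfrac{a_{21}}{r_2},\ Y>0,\ Z=\sigma_iY\Big\},\quad i=1,2. \] Then at every point $p\in P_1\cup P_2$ the vector field points to the outside of $\Sigma$.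
   Context: For $c>c_*$ one has $0<\sigma_1<1<\sigma_2$. *)

(* Defs.v *)
From Stdlib Require Import Reals.
Open Scope R_scope.

Record pt4 := mkpt { X1 : R; X2 : R; Yc : R; Zc : R }.

Definition padd (p q : pt4) : pt4 :=
  mkpt (X1 p + X1 q) (X2 p + X2 q) (Yc p + Yc q) (Zc p + Zc q).
Definition pscale (t : R) (p : pt4) : pt4 :=
  mkpt (t * X1 p) (t * X2 p) (t * Yc p) (t * Zc p).
Definition dot4 (p q : pt4) : R :=
  X1 p * X1 q + X2 p * X2 q + Yc p * Yc q + Zc p * Zc q.

Definition field (r1 r2 mu a12 a13 a21 a31 rho : R) (p : pt4) : pt4 :=
  mkpt (X1 p * (r1 * (1 - X1 p) - a12 * X2 p - a13 * Yc p))
       (X2 p * (r2 * (1 - X2 p) + a21 * X1 p))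
       (rho * (Yc p - Zc p))
       (Yc p * (- mu + a31 * X1 p)).

Definition sigma1 (rho mu a31 : R) : R :=
  (rho + sqrt (rho ^ 2 - 4 * rho * (a31 - mu))) / (2 * rho).
Definition sigma2 (rho mu : R) : R :=
  (rho + sqrt (rho ^ 2 + 4 * rho * mu)) / (2 * rho).

Definition Sigma (r2 a21 s1 s2 : R) (p : pt4) : Prop :=
  0 <= X1 p <= 1 /\ 0 <= X2 p <= 1 + a21 / r2 /\ 0 <= Yc p /\
  s1 * Yc p <= Zc p <= s2 * Yc p.

Definition Pface (r2 a21 s : R) (p : pt4) : Prop :=
  0 < X1 p < 1 /\ 0 < X2 p < 1 + a21 / r2 /\ 0 < Yc p /\ Zc p = s * Yc p.

(* Outward normals of Sigma on the faces Z = s1 Y (Sigma has Z - s1 Y >= 0)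
   and Z = s2 Y (Sigma has s2 Y - Z >= 0). *)
Definition nout1 (s1 : R) : pt4 := mkpt 0 0 s1 (-1).
Definition nout2 (s2 : R) : pt4 := mkpt 0 0 (- s2) 1.

Definition points_outside (S : pt4 -> Prop) (n F : pt4) (p : pt4) : Prop :=
  0 < dot4 F n /\
  exists eps, 0 < eps /\ forall t, 0 < t < eps -> ~ S (padd p (pscale t F)).

(* Main.v *)
Require Import Defs.
From Stdlib Require Import Reals Lra Psatz.
Open Scope R_scope.

Lemma quad_id (rho D : R) : 0 < rho -> 0 <= D ->
  rho * ((rho + sqrt D) / (2 * rho)) * ((rho + sqrt D) / (2 * rho))
  - rho * ((rho + sqrt D) / (2 * rho)) = (D - rho ^ 2) / (4 * rho).
Proof.
  intros Hr HD. pose proof (sqrt_sqrt D HD) as Hs.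
  set (q := sqrt D) in *. rewrite <- Hs. field. lra.
Qed.

Theorem lemma5 (r1 r2 mu a12 a13 a21 a31 d c : R) :
  0 < r1 -> 0 < r2 -> 0 < mu -> 0 < a12 -> 0 < a13 -> 0 < a21 -> 0 < a31 -> 0 < d ->
  r1 > a12 -> a31 > mu ->
  c > 2 * sqrt (d * (a31 - mu)) ->
  let rho := c ^ 2 / d in
  let s1 := sigma1 rho mu a31 in
  let s2 := sigma2 rho mu in
  let F := field r1 r2 mu a12 a13 a21 a31 rho in
  (forall p, Pface r2 a21 s1 p ->
     points_outside (Sigma r2 a21 s1 s2) (nout1 s1) (F p) p) /\
  (forall p, Pface r2 a21 s2 p ->
     points_outside (Sigma r2 a21 s1 s2) (nout2 s2) (F p) p).
Proof.
  intros Hr1 Hr2 Hmu Ha12 Ha13 Ha21 Ha31 Hd H1 H2 Hc rho s1 s2 F.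
  assert (Hsq : 0 <= sqrt (d * (a31 - mu))) by apply sqrt_pos.
  assert (Hsq2 : sqrt (d * (a31 - mu)) * sqrt (d * (a31 - mu)) = d * (a31 - mu))
    by (apply sqrt_sqrt; nra).
  assert (Hc2 : c ^ 2 > 4 * (d * (a31 - mu))) by nra.
  assert (Hrho : 0 < rho) by (unfold rho; apply Rdiv_lt_0_compat; nra).
  assert (Hrho4 : rho > 4 * (a31 - mu)).
  { unfold rho. apply Rmult_lt_reg_r with d; auto.
    replace (c ^ 2 / d * d) with (c ^ 2) by (field; lra). nra. }
  assert (E1 : rho * s1 * s1 - rho * s1 = - (a31 - mu)).
  { unfold s1, sigma1. rewrite quad_id; [field|..]; lra || nra. }
  assert (E2 : rho * s2 * s2 - rho * s2 = mu).
  { unfold s2, sigma2. rewrite quad_id; [field|..]; lra || nra. }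
  split.
  - intros p [[Hx1 Hx1'] [_ [HY HZ]]].
    assert (Hdot : dot4 (F p) (nout1 s1) = a31 * Yc p * (1 - X1 p)).
    { unfold dot4, F, field, nout1; simpl. rewrite HZ. nra. }
    split.
    + rewrite Hdot. apply Rmult_lt_0_compat; [nra|lra].
    + exists 1. split; [lra|]. intros t Ht [_ [_ [_ [HS _]]]].
      revert HS. unfold padd, pscale, F, field; simpl. rewrite HZ.
      intro HS. assert (0 < t * (a31 * Yc p * (1 - X1 p))).
      { apply Rmult_lt_0_compat; [lra|]. apply Rmult_lt_0_compat; [nra|lra]. }
      nra.
  - intros p [[Hx1 Hx1'] [_ [HY HZ]]].
    assert (Hdot : dot4 (F p) (nout2 s2) = a31 * Yc p * X1 p).
    { unfold dot4, F, field, nout2; simpl. rewrite HZ. nra. }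
    split.
    + rewrite Hdot. apply Rmult_lt_0_compat; [nra|lra].
    + exists 1. split; [lra|]. intros t Ht [_ [_ [_ [_ HS]]]].
      revert HS. unfold padd, pscale, F, field; simpl. rewrite HZ.
      intro HS. assert (0 < t * (a31 * Yc p * X1 p)).
      { apply Rmult_lt_0_compat; [lra|]. apply Rmult_lt_0_compat; [nra|lra]. }
      nra.
Qed.
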